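(* For all $\lambda,\alpha,\beta>0$, $X\sim\mathrm{MLFD}(\lambda,\alpha,\beta)$ has increasing failure rate: the function $r(t)=P(X=t)/P(X\ge t)$ is nondecreasing in $t\in\{0,1,2,\dots\}$.
   Context: For $\alpha>0,\beta>0$ and $z\in\mathbb{C}$, the generalized Mittag-Leffler function is $E_{\alpha,\beta}(z)=\sum_{k=0}^\infty z^k/\Gamma(\alpha k+\beta)$. For $\lambda,\alpha,\beta>0$, the Mittag-Leffler function distribution $\mathrm{MLFD}(\lambda,\alpha,\beta)$ is the distribution on $\{0,1,2,\dots\}$ with $P(X=k)=\lambda^k/\{\Gamma(\alpha k+\beta)E_{\alpha,\beta}(\lambda)\}$. *)

(* Defs.v *)
From Stdlib Require Import Reals ClassicalEpsilon.
Open Scope R_scope.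

(* Euler's integral: g is the value of the improper Riemann integral
   int_0^oo t^(x-1) e^(-t) dt, i.e. the limit of int_a^b as a -> 0+, b -> +oo. *)
Definition Gamma_integrand (x : R) : R -> R :=
  fun t => Rpower t (x - 1) * exp (- t).

Definition is_Gamma (x g : R) : Prop :=
  forall eps : R, 0 < eps -> exists M : R, 1 < M /\
    forall a b : R, 0 < a -> a < / M -> M < b ->
      exists pr : Riemann_integrable (Gamma_integrand x) a b,
        Rabs (RiemannInt pr - g) < eps.

(* The Gamma function (meaningful for x > 0, where the integral converges). *)
Definition Gamma (x : R) : R := epsilon (inhabits 0) (is_Gamma x).

Definition series (u : nat -> R) : R := epsilon (inhabits 0) (infinite_sum u).

Definition ML (alpha beta z : R) : R :=
  series (fun k => z ^ k / Gamma (alpha * INR k + beta)).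

Definition mlfd_pmf (lambda alpha beta : R) (k : nat) : R :=
  lambda ^ k / (Gamma (alpha * INR k + beta) * ML alpha beta lambda).

Definition mlfd_tail (lambda alpha beta : R) (t : nat) : R :=
  series (fun j => mlfd_pmf lambda alpha beta (t + j)).

Definition mlfd_rate (lambda alpha beta : R) (t : nat) : R :=
  mlfd_pmf lambda alpha beta t / mlfd_tail lambda alpha beta t.

(* Main.v *)
Require Import Defs.
From Stdlib Require Import Reals Lra Lia Classical ClassicalEpsilon.
From Coquelicot Require Import Coquelicot.
Open Scope R_scope.

Lemma exp_le' a b : a <= b -> exp a <= exp b.
Proof. intros [H|H]; [left; apply exp_increasing; auto | subst; lra]. Qed.

Lemma gi_cont x t : 0 < t -> continuous (Gamma_integrand x) t.
Proof. intros Ht. apply (@ex_derive_continuous R_AbsRing R_NormedModule).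
unfold Gamma_integrand, Rpower. auto_derive. lra. Qed.

Lemma giE x t : 0 < t -> Gamma_integrand x t = exp ((x-1) * ln t - t).
Proof. intros Ht. unfold Gamma_integrand, Rpower. unfold Rminus at 2.
rewrite exp_plus. reflexivity. Qed.

Lemma gi_pos x t : 0 < t -> 0 < Gamma_integrand x t.
Proof. intros Ht. rewrite giE; auto. apply exp_pos. Qed.

Lemma gi_ex x a b : 0 < a -> a <= b -> ex_RInt (Gamma_integrand x) a b.
Proof. intros Ha Hab. apply (@ex_RInt_continuous R_CompleteNormedModule). intros z Hz.
apply gi_cont. rewrite Rmin_left in Hz; lra. Qed.

Lemma I_nonneg x a b : 0 < a -> a <= b -> 0 <= RInt (Gamma_integrand x) a b.
Proof. intros Ha Hab. apply RInt_ge_0; auto. apply gi_ex; auto.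
intros y Hy. left. apply gi_pos. lra. Qed.

Lemma I_chasles x a b c : 0 < a -> a <= b -> b <= c ->
  RInt (Gamma_integrand x) a c = RInt (Gamma_integrand x) a b + RInt (Gamma_integrand x) b c.
Proof. intros. rewrite <- (@RInt_Chasles R_CompleteNormedModule _ a b c). reflexivity.
apply gi_ex; lra. apply gi_ex; lra. Qed.

Lemma I_low x a : 0 < x -> 0 < a -> a <= 1 -> RInt (Gamma_integrand x) a 1 <= / x.
Proof.
intros Hx Ha Ha1.
assert (HF : is_RInt (fun t => Rpower t (x-1)) a 1
   (minus ((fun t => exp (x * ln t) / x) 1) ((fun t => exp (x * ln t) / x) a))).
{ apply (@is_RInt_derive R_CompleteNormedModule (fun t => exp (x * ln t) / x)).
  - intros t Ht. rewrite Rmin_left in Ht by lra. rewrite Rmax_right in Ht by lra.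
    auto_derive. lra. unfold Rpower. replace ((x-1) * ln t) with (x * ln t + - ln t) by ring.
    rewrite exp_plus, exp_Ropp, exp_ln by lra. field. split; lra.
  - intros t Ht. rewrite Rmin_left in Ht by lra.
    apply (@ex_derive_continuous R_AbsRing R_NormedModule). unfold Rpower. auto_derive. lra. }
apply (@is_RInt_unique R_CompleteNormedModule) in HF.
apply Rle_trans with (RInt (fun t => Rpower t (x-1)) a 1).
- apply RInt_le; auto. apply gi_ex; lra. idtac.
  apply (@ex_RInt_continuous R_CompleteNormedModule). intros z Hz. rewrite Rmin_left in Hz by lra.
  apply (@ex_derive_continuous R_AbsRing R_NormedModule). unfold Rpower. auto_derive. lra.
  intros t Ht. unfold Gamma_integrand. rewrite <- (Rmult_1_r (Rpower t (x-1))) at 2.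
  apply Rmult_le_compat_l. unfold Rpower; left; apply exp_pos.
  rewrite <- exp_0. apply exp_le'. lra.
- rewrite HF. cbn. unfold minus, plus, opp. cbn. rewrite ln_1, Rmult_0_r, exp_0.
  assert (0 < exp (x * ln a) / x). { apply Rdiv_lt_0_compat; auto. apply exp_pos. }
  unfold Rdiv in *. lra.
Qed.

Lemma ln_bound t K : 0 < t -> 0 < K -> ln t <= ln K + t / K - 1.
Proof. intros Ht HK. assert (H := exp_ineq1_le (ln (t / K))).
rewrite exp_ln in H by (apply Rdiv_lt_0_compat; auto).
unfold Rdiv in *. rewrite ln_mult, ln_Rinv in H; auto. lra. apply Rinv_0_lt_compat; auto. Qed.

Definition Cx x := exp (Rabs (x-1) * ln (2 * Rabs (x-1) + 2)).

Lemma gi_tail x t : 1 <= t -> Gamma_integrand x t <= Cx x * exp (- t / 2).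
Proof. intros Ht. rewrite giE by lra. unfold Cx. rewrite <- exp_plus. apply exp_le'.
set (y := x - 1). set (K := 2 * Rabs y + 2).
assert (HK : 0 < K) by (unfold K; generalize (Rabs_pos y); lra).
assert (Hl := ln_bound t K ltac:(lra) HK).
assert (Hl0 : 0 <= ln t) by (rewrite <- ln_1; apply ln_le; lra).
assert (Hy : y <= Rabs y) by apply RRle_abs.
assert (H1 : y * ln t <= Rabs y * ln t) by (apply Rmult_le_compat_r; auto).
assert (H2 : Rabs y * ln t <= Rabs y * (ln K + t / K - 1)) by (apply Rmult_le_compat_l; auto using Rabs_pos).
assert (H3 : Rabs y * (t / K) <= t / 2).
{ unfold Rdiv. apply Rmult_le_reg_r with K; auto. rewrite Rmult_assoc. 
  field_simplify; try lra. unfold K. generalize (Rabs_pos y). nra. }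
generalize (Rabs_pos y). nra.
Qed.

Lemma I_high x b : 1 <= b -> RInt (Gamma_integrand x) 1 b <= 2 * Cx x.
Proof.
intros Hb.
assert (HC : 0 < Cx x) by apply exp_pos.
assert (HF : is_RInt (fun t => Cx x * exp (- t / 2)) 1 b
   (minus ((fun t => - 2 * Cx x * exp (- t / 2)) b) ((fun t => - 2 * Cx x * exp (- t / 2)) 1))).
{ apply (@is_RInt_derive R_CompleteNormedModule (fun t => - 2 * Cx x * exp (- t / 2))).
  - intros t Ht. auto_derive. auto. replace (- t * / 2) with (- t / 2) by (unfold Rdiv; ring). field.
  - intros t Ht. apply (@ex_derive_continuous R_AbsRing R_NormedModule). auto_derive. auto. }
apply (@is_RInt_unique R_CompleteNormedModule) in HF.
apply Rle_trans with (RInt (fun t => Cx x * exp (- t / 2)) 1 b).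
- apply RInt_le; auto. apply gi_ex; lra.
  apply (@ex_RInt_continuous R_CompleteNormedModule). intros z Hz.
  apply (@ex_derive_continuous R_AbsRing R_NormedModule). auto_derive. auto.
  intros t Ht. apply gi_tail. lra.
- rewrite HF. cbn. unfold minus, plus, opp. cbn.
  assert (exp (- (1)/2) <= 1) by (apply Rle_trans with (exp 0); [apply exp_le'; lra | rewrite exp_0; lra]).
  assert (0 < exp (-b/2)) by apply exp_pos. assert (Cx x * exp (-(1)/2) <= Cx x * 1) by (apply Rmult_le_compat_l; lra). assert (0 < Cx x * exp (-b/2)) by (apply Rmult_lt_0_compat; lra). lra.
Qed.

Lemma lub_approx (E : R -> Prop) l eps : is_lub E l -> 0 < eps -> exists y, E y /\ l - eps < y.
Proof. intros [Hub Hl] He. apply NNPP. intros Hn.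
assert (is_upper_bound E (l - eps)).
{ intros y Hy. apply Rnot_lt_le. intros Hlt. apply Hn. exists y; auto. }
specialize (Hl _ H). lra. Qed.

Lemma gamma_ex x : 0 < x -> exists g, is_Gamma x g.
Proof.
intros Hx. set (f := Gamma_integrand x).
set (E1 := fun y => exists b, 1 <= b /\ y = RInt f 1 b).
set (E2 := fun y => exists a, 0 < a <= 1 /\ y = RInt f a 1).
assert (B1 : bound E1). { exists (2 * Cx x). intros y [b [Hb ->]]. apply I_high; auto. }
assert (B2 : bound E2). { exists (/ x). intros y [a [Ha ->]]. apply I_low; lra. }
assert (N1 : exists y, E1 y) by (exists (RInt f 1 1); exists 1; split; auto; lra).
assert (N2 : exists y, E2 y) by (exists (RInt f 1 1); exists 1; split; auto; lra).
destruct (completeness E1 B1 N1) as [l1 H1].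
destruct (completeness E2 B2 N2) as [l2 H2].
exists (l2 + l1). intros eps He.
destruct (lub_approx E1 l1 (eps/2) H1 ltac:(lra)) as [y1 [[b0 [Hb0 ->]] Hy1]].
destruct (lub_approx E2 l2 (eps/2) H2 ltac:(lra)) as [y2 [[a0 [Ha0 ->]] Hy2]].
exists (Rmax 2 (Rmax b0 (/ a0))).
assert (Hia : 0 < / a0) by (apply Rinv_0_lt_compat; lra).
assert (HM1 : 2 <= Rmax 2 (Rmax b0 (/ a0))) by apply Rmax_l.
assert (HM2 : b0 <= Rmax 2 (Rmax b0 (/ a0))) by (eapply Rle_trans; [apply Rmax_l| apply Rmax_r]).
assert (HM3 : / a0 <= Rmax 2 (Rmax b0 (/ a0))) by (eapply Rle_trans; [apply Rmax_r| apply Rmax_r]).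
split; [lra|].
intros a b Ha HaM HbM.
assert (Haa0 : a < a0).
{ apply Rlt_le_trans with (/ Rmax 2 (Rmax b0 (/ a0))); auto.
  apply Rle_trans with (/ / a0). apply Rinv_le_contravar; auto. rewrite Rinv_inv; lra. }
exists (ex_RInt_Reals_0 _ _ _ (gi_ex x a b Ha ltac:(lra))).
rewrite <- RInt_Reals. unfold f.
rewrite (I_chasles x a 1 b) by lra. fold f.
assert (U1 : RInt f 1 b <= l1) by (apply H1; exists b; split; auto; lra).
assert (U2 : RInt f a 1 <= l2) by (apply H2; exists a; split; auto; lra).
assert (L1 : RInt f 1 b0 <= RInt f 1 b).
{ unfold f. rewrite (I_chasles x 1 b0 b) by lra. assert (H := I_nonneg x b0 b ltac:(lra) ltac:(lra)). lra. }
assert (L2 : RInt f a0 1 <= RInt f a 1).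
{ unfold f. rewrite (I_chasles x a a0 1) by lra. assert (H := I_nonneg x a a0 ltac:(lra) ltac:(lra)). lra. }
apply Rabs_def1; lra.
Qed.

Lemma gamma_spec x : 0 < x -> is_Gamma x (Gamma x).
Proof. intros Hx. unfold Gamma. apply epsilon_spec. apply gamma_ex; auto. Qed.

Lemma gamma_approx x eps : 0 < x -> 0 < eps -> exists M, 1 < M /\
  forall a b, 0 < a -> a < / M -> M < b -> Rabs (RInt (Gamma_integrand x) a b - Gamma x) < eps.
Proof. intros Hx He. destruct (gamma_spec x Hx eps He) as [M [HM H]].
exists M; split; auto. intros a b Ha HaM HbM. destruct (H a b Ha HaM HbM) as [pr Hpr].
rewrite (RInt_Reals _ _ _ pr). auto. Qed.

Lemma gamma_ge x c d : 0 < x -> 0 < c -> c <= d -> RInt (Gamma_integrand x) c d <= Gamma x.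
Proof. intros Hx Hc Hcd. apply Rnot_lt_le. intros Hlt.
set (eps := RInt (Gamma_integrand x) c d - Gamma x).
destruct (gamma_approx x eps Hx ltac:(unfold eps; lra)) as [M [HM H]].
set (a := Rmin (c/2) (/ (2*M))). set (b := Rmax (2*d) (2*M)).
assert (Ha : 0 < a). { unfold a. apply Rmin_glb_lt. lra. apply Rinv_0_lt_compat. lra. }
assert (Hac : a <= c) by (unfold a; eapply Rle_trans; [apply Rmin_l|lra]).
assert (HaM : a < / M).
{ unfold a. eapply Rle_lt_trans; [apply Rmin_r|]. apply Rinv_lt_contravar; nra. }
assert (Hdb : d <= b) by (unfold b; eapply Rle_trans; [|apply Rmax_l]; lra).
assert (HMb : M < b) by (unfold b; eapply Rlt_le_trans; [|apply Rmax_r]; lra).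
specialize (H a b Ha HaM HMb).
rewrite (I_chasles x a c b), (I_chasles x c d b) in H by lra.
assert (H1 := I_nonneg x a c Ha Hac). assert (H2 := I_nonneg x d b ltac:(lra) Hdb).
apply Rabs_def2 in H. unfold eps in H. lra.
Qed.

Lemma gamma_lower x M : 0 < x -> 1 <= M ->
  exp ((x-1) * ln M) / 2 * exp (-(M+1)) <= Gamma x.
Proof.
intros Hx HM. eapply Rle_trans; [|apply (gamma_ge x M (M+1)); lra].
set (c := exp ((x-1) * ln M) / 2 * exp (-(M+1))).
apply Rle_trans with (RInt (fun _ => c) M (M+1)).
{ rewrite RInt_const. cbn. unfold scal; cbn. unfold mult; cbn. lra. }
apply RInt_le. lra. apply ex_RInt_const. apply gi_ex; lra.
intros t Ht. rewrite giE by lra. unfold c.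
replace (exp ((x-1) * ln M) / 2) with (exp ((x-1) * ln M + - ln 2)).
2:{ rewrite exp_plus, exp_Ropp, exp_ln by lra. unfold Rdiv. reflexivity. }
rewrite <- exp_plus. apply exp_le'.
assert (Hl2 : 0 < ln 2) by (rewrite <- ln_1; apply ln_increasing; lra).
assert (Ht1 : ln M <= ln t) by (apply ln_le; lra).
assert (Ht2 : ln t <= ln 2 + ln M) by (rewrite <- ln_mult by lra; apply ln_le; lra).
destruct (Rle_or_lt 0 (x-1)).
- assert (0 <= (x-1) * (ln t - ln M)) by (apply Rmult_le_pos; lra). nra.
- assert ((x-1) * (ln t - ln M) >= - (ln t - ln M)) by nra. nra.
Qed.

Lemma gamma_pos x : 0 < x -> 0 < Gamma x.
Proof. intros Hx. eapply Rlt_le_trans; [|apply (gamma_lower x 1); lra].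
apply Rmult_lt_0_compat; [apply Rdiv_lt_0_compat; [apply exp_pos|lra] | apply exp_pos]. Qed.

Lemma exp_conv l u v : 0 <= l <= 1 -> exp (l*u + (1-l)*v) <= l * exp u + (1-l) * exp v.
Proof. intros Hl. set (m := l*u + (1-l)*v).
assert (H1 : exp m * (1 + (u-m)) <= exp u).
{ replace (exp u) with (exp m * exp (u-m)) by (rewrite <- exp_plus; f_equal; ring).
  apply Rmult_le_compat_l. left; apply exp_pos. apply exp_ineq1_le. }
assert (H2 : exp m * (1 + (v-m)) <= exp v).
{ replace (exp v) with (exp m * exp (v-m)) by (rewrite <- exp_plus; f_equal; ring).
  apply Rmult_le_compat_l. left; apply exp_pos. apply exp_ineq1_le. }
assert (H3 : l * (exp m * (1 + (u-m))) <= l * exp u) by (apply Rmult_le_compat_l; lra).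
assert (H4 : (1-l) * (exp m * (1 + (v-m))) <= (1-l) * exp v) by (apply Rmult_le_compat_l; lra).
assert (E : l * (exp m * (1 + (u-m))) + (1-l) * (exp m * (1 + (v-m))) = exp m) by (unfold m; ring).
lra. Qed.

Lemma le_eps u v w : 0 <= w -> (forall eps, 0 < eps -> u <= v + eps * w) -> u <= v.
Proof. intros Hw H. apply Rnot_lt_le. intros Hlt.
specialize (H ((u - v) / (2 * (w + 1))) ltac:(apply Rdiv_lt_0_compat; lra)).
assert (((u - v) / (2 * (w + 1))) * w < u - v).
{ apply Rmult_lt_reg_r with (2*(w+1)). lra. field_simplify; try lra. nra. }
lra. Qed.

Lemma gamma_logconv p q l : 0 < p -> 0 < q -> 0 < l < 1 ->
  Gamma (l*p + (1-l)*q) <= exp (l * ln (Gamma p) + (1-l) * ln (Gamma q)).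
Proof.
intros Hp Hq Hl. set (x := l*p + (1-l)*q).
assert (Hx : 0 < x) by (unfold x; nra).
set (F := Gamma p). set (G := Gamma q).
assert (HF : 0 < F) by (apply gamma_pos; auto).
assert (HG : 0 < G) by (apply gamma_pos; auto).
set (K := exp (l * ln F + (1-l) * ln G)).
set (c1 := K * l / F). set (c2 := K * (1-l) / G).
assert (Hc1 : 0 <= c1) by (unfold c1, K; apply Rmult_le_pos; [|left; apply Rinv_0_lt_compat; auto]; left; apply Rmult_lt_0_compat; [apply exp_pos|lra]).
assert (Hc2 : 0 <= c2) by (unfold c2, K; apply Rmult_le_pos; [|left; apply Rinv_0_lt_compat; auto]; left; apply Rmult_lt_0_compat; [apply exp_pos|lra]).
assert (Pw : forall t, 0 < t -> Gamma_integrand x t <=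
   c1 * Gamma_integrand p t + c2 * Gamma_integrand q t).
{ intros t Ht. rewrite !giE by auto.
  set (P := (p-1) * ln t - t). set (Q := (q-1) * ln t - t).
  replace ((x-1) * ln t - t) with ((l * ln F + (1-l) * ln G) + (l * (P - ln F) + (1-l) * (Q - ln G)))
    by (unfold x, P, Q; ring).
  rewrite exp_plus. fold K.
  replace (c1 * exp P + c2 * exp Q) with (K * (l * exp (P - ln F) + (1-l) * exp (Q - ln G))).
  2:{ unfold Rminus at 1 3. rewrite !exp_plus, !exp_Ropp, !exp_ln by auto. unfold c1, c2. field. lra. }
  apply Rmult_le_compat_l. left; apply exp_pos. apply exp_conv. lra. }
apply (le_eps _ _ (c1 + c2 + 1)). lra.
intros eps He.
destruct (gamma_approx x eps Hx He) as [M1 [HM1 A1]].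
destruct (gamma_approx p eps Hp He) as [M2 [HM2 A2]].
destruct (gamma_approx q eps Hq He) as [M3 [HM3 A3]].
set (M := Rmax M1 (Rmax M2 M3)).
assert (H1 : M1 <= M) by apply Rmax_l.
assert (H2 : M2 <= M) by (eapply Rle_trans; [apply Rmax_l| apply Rmax_r]).
assert (H3 : M3 <= M) by (eapply Rle_trans; [apply Rmax_r| apply Rmax_r]).
set (a := / (2 * M)). set (b := 2 * M).
assert (Ha : 0 < a) by (apply Rinv_0_lt_compat; lra).
assert (Hai : forall Mi, 1 < Mi -> Mi <= M -> a < / Mi).
{ intros Mi HMi HMiM. apply Rinv_lt_contravar; nra. }
specialize (A1 a b Ha (Hai _ HM1 H1) ltac:(unfold b; lra)).
specialize (A2 a b Ha (Hai _ HM2 H2) ltac:(unfold b; lra)).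
specialize (A3 a b Ha (Hai _ HM3 H3) ltac:(unfold b; lra)).
apply Rabs_def2 in A1. apply Rabs_def2 in A2. apply Rabs_def2 in A3. fold F G in A2, A3.
assert (Hab : a <= b).
{ unfold a, b. apply Rle_trans with 1. rewrite <- Rinv_1. apply Rinv_le_contravar; lra. lra. }
assert (HI : RInt (Gamma_integrand x) a b <=
   c1 * RInt (Gamma_integrand p) a b + c2 * RInt (Gamma_integrand q) a b).
{ assert (Hg : is_RInt (fun t => plus (scal c1 (Gamma_integrand p t)) (scal c2 (Gamma_integrand q t))) a b
      (plus (scal c1 (RInt (Gamma_integrand p) a b)) (scal c2 (RInt (Gamma_integrand q) a b)))).
  { apply (@is_RInt_plus R_NormedModule); apply (@is_RInt_scal R_NormedModule);
      apply (@RInt_correct R_CompleteNormedModule); apply gi_ex; auto. }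
  change (c1 * RInt (Gamma_integrand p) a b + c2 * RInt (Gamma_integrand q) a b) with
    (plus (scal c1 (RInt (Gamma_integrand p) a b)) (scal c2 (RInt (Gamma_integrand q) a b))).
  rewrite <- (@is_RInt_unique R_CompleteNormedModule _ _ _ _ Hg).
  apply RInt_le; auto. apply gi_ex; auto. eexists; exact Hg.
  intros t Ht. apply Pw. lra. }
assert (E1 : c1 * F = K * l) by (unfold c1; field; lra).
assert (E2 : c2 * G = K * (1 - l)) by (unfold c2; field; lra).
assert (c1 * RInt (Gamma_integrand p) a b <= c1 * (F + eps)) by (apply Rmult_le_compat_l; lra).
assert (c2 * RInt (Gamma_integrand q) a b <= c2 * (G + eps)) by (apply Rmult_le_compat_l; lra).
nra.
Qed.

Lemma gamma_shift x y h : 0 < x -> x <= y -> 0 <= h ->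
  Gamma (x + h) * Gamma y <= Gamma x * Gamma (y + h).
Proof.
intros Hx Hxy Hh.
destruct Hxy as [Hxy|<-]; [|lra].
destruct Hh as [Hh|<-]; [|rewrite !Rplus_0_r; lra].
set (l := (y - x) / (y + h - x)).
assert (Hl : 0 < l < 1).
{ unfold l. split. apply Rdiv_lt_0_compat; lra.
  apply Rmult_lt_reg_r with (y+h-x). lra. field_simplify; lra. }
assert (G1 := gamma_logconv x (y+h) l Hx ltac:(lra) Hl).
assert (G2 := gamma_logconv x (y+h) (1-l) Hx ltac:(lra) ltac:(lra)).
replace (l * x + (1 - l) * (y + h)) with (x + h) in G1 by (unfold l; field; lra).
replace ((1-l) * x + (1 - (1-l)) * (y + h)) with y in G2 by (unfold l; field; lra).
assert (P1 := gamma_pos (x+h) ltac:(lra)). assert (P2 := gamma_pos y ltac:(lra)).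
apply Rle_trans with (exp (l * ln (Gamma x) + (1 - l) * ln (Gamma (y + h))) *
   exp ((1-l) * ln (Gamma x) + (1 - (1-l)) * ln (Gamma (y + h)))).
{ apply Rmult_le_compat; lra. }
rewrite <- exp_plus.
replace (l * ln (Gamma x) + (1 - l) * ln (Gamma (y + h)) +
   ((1 - l) * ln (Gamma x) + (1 - (1 - l)) * ln (Gamma (y + h))))
  with (ln (Gamma x) + ln (Gamma (y+h))) by ring.
rewrite exp_plus, !exp_ln; try lra; apply gamma_pos; lra.
Qed.

Section S.
Variables (lambda alpha beta : R).
Hypotheses (hl : 0 < lambda) (ha : 0 < alpha) (hb : 0 < beta).

Definition qq (k : nat) := lambda ^ k / Gamma (alpha * INR k + beta).

Lemma arg_pos k : 0 < alpha * INR k + beta.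
Proof. assert (0 <= INR k) by apply pos_INR. nra. Qed.

Lemma qq_pos k : 0 < qq k.
Proof. unfold qq. apply Rdiv_lt_0_compat. apply pow_lt; auto. apply gamma_pos, arg_pos. Qed.

Lemma qq_cross s t j : (s <= t)%nat -> qq s * qq (t + j) <= qq t * qq (s + j).
Proof.
intros Hst. unfold qq. rewrite !plus_INR.
assert (Hle : alpha * INR s + beta <= alpha * INR t + beta).
{ apply le_INR in Hst. nra. }
assert (Hj : 0 <= alpha * INR j) by (assert (0 <= INR j) by apply pos_INR; nra).
assert (G := gamma_shift _ _ _ (arg_pos s) Hle Hj).
replace (alpha * (INR t + INR j) + beta) with (alpha * INR t + beta + alpha * INR j) by ring.
replace (alpha * (INR s + INR j) + beta) with (alpha * INR s + beta + alpha * INR j) by ring.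
assert (A1 := gamma_pos _ (arg_pos s)). assert (A2 := gamma_pos _ (arg_pos t)).
assert (A3 := gamma_pos (alpha * INR s + beta + alpha * INR j) ltac:(generalize (arg_pos s); lra)).
assert (A4 := gamma_pos (alpha * INR t + beta + alpha * INR j) ltac:(generalize (arg_pos t); lra)).
replace (lambda ^ s / Gamma (alpha * INR s + beta) *
  (lambda ^ (t + j) / Gamma (alpha * INR t + beta + alpha * INR j)))
 with (lambda ^ s * lambda ^ (t+j) * / (Gamma (alpha * INR s + beta) * Gamma (alpha * INR t + beta + alpha * INR j)))
 by (field; lra).
replace (lambda ^ t / Gamma (alpha * INR t + beta) *
  (lambda ^ (s + j) / Gamma (alpha * INR s + beta + alpha * INR j)))
 with (lambda ^ s * lambda ^ (t+j) * / (Gamma (alpha * INR s + beta + alpha * INR j) * Gamma (alpha * INR t + beta)))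
 by (rewrite !pow_add; field; lra).
apply Rmult_le_compat_l. left; apply Rmult_lt_0_compat; apply pow_lt; auto.
apply Rinv_le_contravar. apply Rmult_lt_0_compat; auto. lra.
Qed.

Lemma qq_summable t : ex_series (fun j => qq (t + j)).
Proof.
set (L := ln (2 * lambda + 1) / alpha).
assert (HL : 0 <= L).
{ unfold L. apply Rmult_le_pos; [|left; apply Rinv_0_lt_compat; auto].
  rewrite <- ln_1. apply ln_le; lra. }
set (M := exp L).
assert (HM : 1 <= M) by (unfold M; rewrite <- exp_0; apply exp_le'; auto).
set (c0 := exp ((beta - 1) * L) / 2 * exp (- (M + 1))).
assert (Hc0 : 0 < c0) by (unfold c0; apply Rmult_lt_0_compat; [apply Rdiv_lt_0_compat; [apply exp_pos|lra]|apply exp_pos]).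
set (rho := lambda / (2 * lambda + 1)).
assert (Hrho : 0 < rho < 1).
{ unfold rho. split. apply Rdiv_lt_0_compat; lra. apply Rmult_lt_reg_r with (2*lambda+1). lra.
  field_simplify; lra. }
assert (Bd : forall k, qq k <= / c0 * rho ^ k).
{ intros k. assert (G := gamma_lower _ M (arg_pos k) HM).
  unfold M in G. rewrite ln_exp in G.
  replace ((alpha * INR k + beta - 1) * L) with (INR k * ln (2 * lambda + 1) + (beta - 1) * L) in G
    by (unfold L; field; lra).
  rewrite exp_plus in G. fold M in G.
  replace (exp (INR k * ln (2 * lambda + 1))) with ((2 * lambda + 1) ^ k) in G
    by (rewrite <- Rpower_pow by lra; reflexivity).
  assert (Hp : 0 < (2 * lambda + 1) ^ k) by (apply pow_lt; lra).
  unfold qq. unfold rho. replace ((lambda / (2 * lambda + 1)) ^ k) with (lambda ^ k * / (2 * lambda + 1) ^ k) by (unfold Rdiv; rewrite Rpow_mult_distr, pow_inv; ring).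
  assert (HG := gamma_pos _ (arg_pos k)).
  assert (Hlk : 0 < lambda ^ k) by (apply pow_lt; lra).
  replace (/ c0 * (lambda ^ k * / (2 * lambda + 1) ^ k)) with (lambda ^ k / (c0 * (2 * lambda + 1) ^ k))
    by (field; lra).
  apply Rmult_le_compat_l. lra. apply Rinv_le_contravar. apply Rmult_lt_0_compat; auto.
  unfold c0. lra. }
apply (@ex_series_le R_AbsRing R_CompleteNormedModule _ (fun j => (/ c0 * rho ^ t) * rho ^ j)).
- intros j. rewrite Rabs_pos_eq by (left; apply qq_pos). eapply Rle_trans; [apply Bd|].
  rewrite pow_add. lra.
- apply (@ex_series_scal_l R_AbsRing R_NormedModule). apply ex_series_geom.
  rewrite Rabs_pos_eq; lra.
Qed.

Lemma Series_ge_first a : ex_series a -> (forall n, 0 <= a n) -> a 0%nat <= Series a.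
Proof. intros Ha Hp. rewrite Series_incr_1 by auto.
assert (0 <= Series (fun k => a (S k))).
{ rewrite <- (Rmult_0_l (Series (fun k => a (S k)))). rewrite <- Series_scal_l.
  apply Series_le. intros n. specialize (Hp (S n)). lra.
  apply (ex_series_incr_1 a). auto. }
lra. Qed.

End S.

Theorem mainTheorem8 (lambda alpha beta : R) (hl : 0 < lambda) (ha : 0 < alpha)
  (hb : 0 < beta) (s t : nat) (hst : (s <= t)%nat) :
  mlfd_rate lambda alpha beta s <= mlfd_rate lambda alpha beta t.
Proof.
set (c := ML alpha beta lambda).
destruct (Req_dec c 0) as [Hc|Hc].
{ assert (Z : forall k, mlfd_pmf lambda alpha beta k = 0).
  { intros k. unfold mlfd_pmf. fold c. rewrite Hc, Rmult_0_r. unfold Rdiv. rewrite Rinv_0. ring. }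
  unfold mlfd_rate. rewrite !Z. unfold Rdiv. rewrite !Rmult_0_l. lra. }
assert (Pm : forall k, mlfd_pmf lambda alpha beta k = qq lambda alpha beta k / c).
{ intros k. unfold mlfd_pmf, qq. fold c. assert (H := gamma_pos _ (arg_pos alpha beta ha hb k)).
  field. split; lra. }
set (S := fun u => Series (fun j => qq lambda alpha beta (u + j))).
assert (Tl : forall u, mlfd_tail lambda alpha beta u = S u / c).
{ intros u. unfold mlfd_tail, series.
  assert (H : is_series (fun j => mlfd_pmf lambda alpha beta (u + j)) (S u / c)).
  { apply (@is_series_ext R_AbsRing R_NormedModule (fun j => qq lambda alpha beta (u + j) * / c)).
    intros n. rewrite Pm. reflexivity.
    apply is_series_scal_r. apply Series_correct. apply qq_summable; auto. }
  apply is_series_Reals in H.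
  apply (uniqueness_sum (fun j => mlfd_pmf lambda alpha beta (u + j))); auto.
  apply epsilon_spec. eauto. }
assert (Spos : forall u, 0 < S u).
{ intros u. eapply Rlt_le_trans; [apply (qq_pos lambda alpha beta hl ha hb u)|].
  unfold S. replace (qq lambda alpha beta u) with ((fun j => qq lambda alpha beta (u + j)) 0%nat)
    by (cbn; rewrite Nat.add_0_r; reflexivity).
  apply (Series_ge_first (fun j => qq lambda alpha beta (u + j))). apply qq_summable; auto. intros n. left; apply qq_pos; auto. }
unfold mlfd_rate. rewrite !Tl, !Pm.
assert (Hs := Spos s). assert (Ht := Spos t).
replace (qq lambda alpha beta s / c / (S s / c)) with (qq lambda alpha beta s / S s) by (field; lra).
replace (qq lambda alpha beta t / c / (S t / c)) with (qq lambda alpha beta t / S t) by (field; lra).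
assert (Key : qq lambda alpha beta s * S t <= qq lambda alpha beta t * S s).
{ unfold S. rewrite <- !Series_scal_l. apply Series_le.
  - intros n. split. left; apply Rmult_lt_0_compat; apply qq_pos; auto.
    apply qq_cross; auto.
  - apply (@ex_series_scal_l R_AbsRing R_NormedModule). apply qq_summable; auto. }
apply Rmult_le_reg_r with (S s * S t). nra.
replace (qq lambda alpha beta s / S s * (S s * S t)) with (qq lambda alpha beta s * S t) by (field; lra).
replace (qq lambda alpha beta t / S t * (S s * S t)) with (qq lambda alpha beta t * S s) by (field; lra).
exact Key.
Qed.
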